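(* Let $\operatorname{P}\in\operatorname{MM}(A,\theta,S)$, $E\subset\mathbb{Y}$, and let $\theta_i$ with $i\in S_j$ be varied to $\tilde\theta_i$. If $0\le |A_{y,S_j}|\le 1$ for all $y\in E$, then for any linear $\tilde\theta_i$-covariation scheme $\sigma$ the sensitivity function $\sigma(\operatorname{P})(E)$ is a linear (affine) function of $\tilde\theta_i$.
   Context: Let $\mathbb{Y}$ be a finite set with $q$ elements. A monomial model $\operatorname{MM}(A,\theta,S)$ is given by $A\in\mathcal{M}_{q\times k}(\mathbb{Z}_{\ge0})$ with rows $A_y$, parameters $\theta\in\mathbb{R}^k_{>0}$, and a partition $S=\{S_1,\dots,S_n\}$ of $[k]$ with each block $(\theta_l)_{l\in S_m}$ in the open probability simplex; $\operatorname{P}(y)=\prod_l\theta_l^{A_{y,l}}$, a probability distribution for every such parameter; $\operatorname{P}(E)=\sum_{y\in E}\operatorname{P}(y)$; $|A_{y,S_j}|=\sum_{l\in S_j}A_{y,l}$; $S_j^{-i}=S_j\setminus\{i\}$. A linear $\tilde\theta_i$-covariation scheme $\sigma$ sets $\theta_i$ to $\tilde\theta_i\in(0,1)$, sets $\tilde\theta_k=\gamma_k\tilde\theta_i+\delta_k$ for $k\in S_j^{-i}$ with constants chosen so the block $S_j$ sums to one, and leaves $\theta_l$, $l\notin S_j$, unchanged; $\sigma(\operatorname{P})(y)=\tilde\theta^{A_y}$ (proportional and uniform covariation are special cases). *)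

(* Defs.v *)
From HB Require Import structures.
From mathcomp Require Import all_boot all_order all_algebra.
Set Implicit Arguments. Unset Strict Implicit. Unset Printing Implicit Defensive.
Import Order.TTheory GRing.Theory Num.Theory.
Local Open Scope ring_scope.

Definition mono_prob (R : realFieldType) (Y : finType) (k : nat)
  (A : Y -> 'I_k -> nat) (theta : 'I_k -> R) (y : Y) : R :=
  \prod_(l < k) theta l ^+ A y l.

Definition mono_probE (R : realFieldType) (Y : finType) (k : nat)
  (A : Y -> 'I_k -> nat) (theta : 'I_k -> R) (E : {set Y}) : R :=
  \sum_(y in E) mono_prob A theta y.

Definition valid_param (R : realFieldType) (k : nat)
  (S : {set {set 'I_k}}) (theta : 'I_k -> R) : Prop :=
  (forall l, 0 < theta l) /\ (forall B, B \in S -> \sum_(l in B) theta l = 1).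

Definition monomial_model (R : realFieldType) (Y : finType) (k : nat)
  (A : Y -> 'I_k -> nat) (theta : 'I_k -> R) (S : {set {set 'I_k}}) : Prop :=
  partition S [set: 'I_k] /\ valid_param S theta /\
  (forall theta' : 'I_k -> R, valid_param S theta' -> \sum_(y : Y) mono_prob A theta' y = 1).

Definition lin_cov (R : realFieldType) (k : nat) (theta : 'I_k -> R)
  (Sj : {set 'I_k}) (i : 'I_k) (gamma delta : 'I_k -> R) (t : R) : 'I_k -> R :=
  fun l => if l == i then t else if l \in Sj then gamma l * t + delta l else theta l.

Definition lin_cov_scheme (R : realFieldType) (k : nat) (theta : 'I_k -> R)
  (Sj : {set 'I_k}) (i : 'I_k) (gamma delta : 'I_k -> R) : Prop :=
  forall t : R, 0 < t < 1 -> \sum_(l in Sj) lin_cov theta Sj i gamma delta t l = 1.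

(* Main.v *)
Require Import Defs.
From HB Require Import structures.
From mathcomp Require Import all_boot all_order all_algebra.
From mathcomp Require Import ring.
Import Order.TTheory GRing.Theory Num.Theory.
Local Open Scope ring_scope.

Definition aff (R : realFieldType) (f : R -> R) := exists a b : R, forall t, f t = a * t + b.

Lemma aff_sum (R : realFieldType) (Y : finType) (E : {set Y}) (F : Y -> R -> R) :
  (forall y, y \in E -> @aff R (F y)) -> @aff R (fun t => \sum_(y in E) F y t).
Proof.
move=> H.
suff: forall s : seq Y, @aff R (fun t => \sum_(y <- s | y \in E) F y t).
  by move/(_ (enum Y)) => [a [b Hab]]; exists a, b => t; rewrite -Hab big_enum_cond.
elim=> [|x s [a [b IH]]].
  by exists 0, 0 => t; rewrite big_nil mul0r addr0.
rewrite /=; case xE: (x \in E).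
  have [c [d Hcd]] := H x xE.
  exists (c + a), (d + b) => t; rewrite big_cons xE Hcd IH; ring.
by exists a, b => t; rewrite big_cons xE IH.
Qed.

Theorem corollary2 (R : realFieldType) (Y : finType) (k : nat)
  (A : Y -> 'I_k -> nat) (theta : 'I_k -> R) (S : {set {set 'I_k}})
  (E : {set Y}) (Sj : {set 'I_k}) (i : 'I_k) (gamma delta : 'I_k -> R) :
  monomial_model A theta S ->
  Sj \in S -> i \in Sj ->
  (forall y, y \in E -> (\sum_(l in Sj) A y l <= 1)%N) ->
  lin_cov_scheme theta Sj i gamma delta ->
  exists a b : R, forall t : R, 0 < t < 1 ->
    mono_probE A (lin_cov theta Sj i gamma delta t) E = a * t + b.
Proof.
move=> _ _ iS HA _.
suff [a [b Hab]] : @aff R (fun t => mono_probE A (lin_cov theta Sj i gamma delta t) E).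
  by exists a, b => t _; exact: Hab.
apply: aff_sum => y yE.
set C := \prod_(l < k | l \notin Sj) theta l ^+ A y l.
have split t : mono_prob A (lin_cov theta Sj i gamma delta t) y =
   (\prod_(l < k | l \in Sj) lin_cov theta Sj i gamma delta t l ^+ A y l) * C.
  rewrite /mono_prob (bigID (fun l => l \in Sj)) /=; congr (_ * _).
  apply: eq_bigr => l lS; rewrite /lin_cov (negbTE lS).
  by case: eqP => // li; rewrite li iS in lS.
case: (boolP [exists l, (l \in Sj) && (A y l != 0%N)]) => [/existsP [l0 /andP [l0S Al0n]] | none].
- 
  have sumge := HA y yE.
  rewrite (bigD1 l0) //= in sumge.
  have A1 : A y l0 = 1%N by move: sumge Al0n; case: (A y l0) => [|[|]].
  have others : forall l, (l \in Sj) && (l != l0) -> A y l = 0%N.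
    move=> l /andP [lS ll0]; move: sumge; rewrite A1 (bigD1 l) /=; last by rewrite lS ll0.
    by rewrite add1n ltnS leqn0 addn_eq0 => /andP [/eqP].
  have key t : mono_prob A (lin_cov theta Sj i gamma delta t) y =
      lin_cov theta Sj i gamma delta t l0 * C.
    rewrite split (bigD1 l0) //= A1 expr1 big1 ?mulr1 // => l Hl.
    by rewrite others // expr0.
  have [e|ne] := eqVneq l0 i.
    by exists C, 0 => t; rewrite key /lin_cov e eqxx addr0 mulrC.
  by exists (gamma l0 * C), (delta l0 * C) => t; rewrite key /lin_cov (negbTE ne) l0S mulrDl mulrAC.
- exists 0, C => t; rewrite split big1 ?mul1r ?mul0r ?add0r // => l lS.
  have: ~~ ((l \in Sj) && (A y l != 0%N)).
    by apply/negP => H; move/negP: none; apply; apply/existsP; exists l.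
  by rewrite lS /= negbK => /eqP ->; rewrite expr0.
Qed.
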